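(* Let $A=(a_{ij})_{1\le i,j\le n}$ be a complex matrix such that $A^T$ is a Nekrasov matrix. Let $\bar k$ be the smallest index such that $a_{j\bar k}=0$ for all $j>\bar k$, and let $\bar\epsilon_1,\dots,\bar\epsilon_n$ be real numbers with $\bar\epsilon_i=0$ for $i<\bar k$ and, for $i=\bar k,\dots,n$, $0<\bar\epsilon_i<|a_{ii}|-h_i(A^T)$ and $\bar\epsilon_i>\sum_{j=\bar k}^{i-1}\frac{|a_{ji}|\bar\epsilon_j}{|a_{jj}|}$. Define $\bar w_i:=\sum_{j=1}^{i-1}|a_{ji}|\frac{\bar\epsilon_j}{|a_{jj}|}$ and $\bar p_i:=\sum_{j=i+1}^{n}|a_{ji}|\frac{|a_{jj}|-h_j(A^T)-\bar\epsilon_j}{|a_{jj}|}$. Then $$\|A^{-1}\|_1\le \frac{\max_{i\in N}\frac{h_i(A^T)+\bar\epsilon_i}{|a_{ii}|}}{\min_{i\in N}(\bar\epsilon_i-\bar w_i+\bar p_i)}.$$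
   Context: For a complex $n\times n$ matrix $B=(b_{ij})$ with $b_{ii}\ne 0$ for all $i$, define recursively $h_1(B):=\sum_{j\ne 1}|b_{1j}|$ and $h_i(B):=\sum_{j=1}^{i-1}|b_{ij}|\frac{h_j(B)}{|b_{jj}|}+\sum_{j=i+1}^{n}|b_{ij}|$ for $i=2,\dots,n$. $B$ is a Nekrasov matrix if $|b_{ii}|>h_i(B)$ for all $i\in N=\{1,\dots,n\}$. $\|\cdot\|_1$ is the maximum absolute column sum norm. *)

(* Defs.v *)
(* Complex entries: C is an arbitrary numClosedFieldType
   (covers the complex numbers). *)
From HB Require Import structures.
From mathcomp Require Import all_boot all_order all_algebra.
Set Implicit Arguments. Unset Strict Implicit. Unset Printing Implicit Defensive.
Import Order.TTheory GRing.Theory Num.Theory.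
Local Open Scope ring_scope.

Section Nekrasov.
Variables (C : numClosedFieldType) (n : nat).

(* fuel-based version of the recursion; [hfuel B f i] is the correct h_i
   as soon as f > i (0-based indices) *)
Fixpoint hfuel (B : 'M[C]_n) (f : nat) (i : 'I_n) : C :=
  match f with
  | 0 => 0
  | f'.+1 =>
      \sum_(j < n | (j < i)%N) `|B i j| * hfuel B f' j / `|B j j|
      + \sum_(j < n | (i < j)%N) `|B i j|
  end.

Definition nek_h (B : 'M[C]_n) (i : 'I_n) : C := hfuel B i.+1 i.

Definition nekrasov (B : 'M[C]_n) : Prop :=
  forall i : 'I_n, B i i != 0 /\ nek_h B i < `|B i i|.

Definition norm1 (M : 'M[C]_n) : C :=
  \big[Num.max/0]_(j < n) \sum_(i < n) `|M i j|.

End Nekrasov.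

(* Main.v *)
Require Import Defs.
From HB Require Import structures.
From mathcomp Require Import all_boot all_order all_algebra.
From mathcomp Require Import ring.
Import Order.TTheory GRing.Theory Num.Theory.
Local Open Scope ring_scope.

Lemma min_le_l (R : numDomainType) (x y : R) : x \is Num.real -> y \is Num.real ->
  Num.min x y <= x /\ Num.min x y <= y.
Proof. move=> xr yr; have [h|h] := real_leP xr yr; split => //; exact: ltW. Qed.

Lemma max_ge_l (R : numDomainType) (x y : R) : x \is Num.real -> y \is Num.real ->
  x <= Num.max x y /\ y <= Num.max x y.
Proof. move=> xr yr; have [h|h] := real_leP xr yr; split => //; exact: ltW. Qed.

Lemma bigmin_le (R : numDomainType) (I : eqType) (s : seq I) (F : I -> R) x0 i :
  i \in s -> (forall j, F j \is Num.real) -> x0 \is Num.real ->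
  \big[Num.min/x0]_(j <- s) F j <= F i.
Proof.
move=> + Fr x0r; elim: s => [//|a s IH].
rewrite inE big_cons => /orP[/eqP->|/IH h].
  by have [h1 h2] := @min_le_l _ _ _ (Fr a) (@bigmin_real _ _ x0 s predT F x0r (fun j _ => Fr j)).
have [_ h2] := @min_le_l _ _ _ (Fr a) (@bigmin_real _ _ x0 s predT F x0r (fun j _ => Fr j)).
exact: le_trans h2 h.
Qed.

Lemma bigmax_ge (R : numDomainType) (I : eqType) (s : seq I) (F : I -> R) x0 i :
  i \in s -> (forall j, F j \is Num.real) -> x0 \is Num.real ->
  F i <= \big[Num.max/x0]_(j <- s) F j.
Proof.
move=> + Fr x0r; elim: s => [//|a s IH].
rewrite inE big_cons => /orP[/eqP->|/IH h].
  by have [h1 h2] := @max_ge_l _ _ _ (Fr a) (@bigmax_real _ _ x0 s predT F x0r (fun j _ => Fr j)).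
have [_ h2] := @max_ge_l _ _ _ (Fr a) (@bigmax_real _ _ x0 s predT F x0r (fun j _ => Fr j)).
exact: le_trans h h2.
Qed.

Lemma bigmin_mem (R : numDomainType) (n : nat) (F : 'I_n.+1 -> R) :
  exists k, \big[Num.min/F ord0]_(j < n.+1) F j = F k.
Proof.
apply: (big_ind (fun x => exists k, x = F k)); first by exists ord0.
move=> x y [k1 ->] [k2 ->]; rewrite /Num.min /Order.min.
by case: ifP => _; [exists k1|exists k2].
by move=> i _; exists i.
Qed.

Lemma sum_split3 (R : nmodType) (n : nat) (i : 'I_n) (f : 'I_n -> R) :
  \sum_(j < n) f j = \sum_(j < n | (j < i)%N) f j + f i + \sum_(j < n | (i < j)%N) f j.
Proof.
rewrite (bigID (fun j : 'I_n => (j < i)%N)) /= -addrA; congr (_ + _).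
rewrite (bigD1 i) ?ltnn //=; congr (_ + _); apply: eq_bigl => j.
rewrite -leqNgt ltn_neqAle eq_sym andbC; congr (_ && _).
Qed.

Lemma sum_neq_split (R : zmodType) (n : nat) (i : 'I_n) (f : 'I_n -> R) :
  \sum_(j < n | j != i) f j = \sum_(j < n | (j < i)%N) f j + \sum_(j < n | (i < j)%N) f j.
Proof.
have := @sum_split3 _ _ i f; rewrite (bigD1 i) //= [_ + f i]addrC -addrA.
exact: addrI.
Qed.

Lemma key (R : numDomainType) (n : nat) (A : 'M[R]_n) (d G y : 'I_n -> R) :
  (forall i, 0 <= d i) ->
  (forall i, G i <= `|A i i| * d i - \sum_(j < n | j != i) `|A j i| * d j) ->
  \sum_(i < n) `|y i| * G i <= \sum_(i < n) d i * `|\sum_(j < n) A i j * y j|.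
Proof.
move=> d0 HG.
have step i : `|A i i| * `|y i| - \sum_(j < n | j != i) `|A i j| * `|y j|
              <= `|\sum_(j < n) A i j * y j|.
  rewrite [X in _ <= `|X|](bigD1 i) //=.
  apply: (le_trans _ (lerB_normD _ _)); rewrite normrM lerD2l lerN2.
  apply: le_trans (ler_norm_sum _ _ _) _.
  by apply: ler_sum => j _; rewrite normrM.
apply: (le_trans _ (ler_sum _ (fun i _ => ler_wpM2l (d0 i) (step i)))).
rewrite [X in _ <= X](eq_bigr (fun i => d i * (`|A i i| * `|y i|)
   - \sum_(j < n) (if j != i then d i * (`|A i j| * `|y j|) else 0))); last first.
  by move=> i _; rewrite mulrBr mulr_sumr -big_mkcond.
rewrite sumrB exchange_big /=.
rewrite -sumrB; apply: ler_sum => i _.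
rewrite -big_mkcond /=.
apply: (le_trans (ler_wpM2l (normr_ge0 (y i)) (HG i))).
rewrite mulrBr mulr_sumr le_eqVlt; apply/orP; left; apply/eqP; congr (_ - _).
  by ring.
apply: eq_big => [j|j _]; first by rewrite eq_sym.
by ring.
Qed.

Lemma hfuel_stable (C : numClosedFieldType) n (B : 'M[C]_n) f g (i : 'I_n) :
  (i < f)%N -> (i < g)%N -> hfuel B f i = hfuel B g i.
Proof.
elim: f g i => [//|f IH] [//|g] i /= hf hg.
congr (_ + _); apply: eq_bigr => j ji; rewrite (IH g) //.
  exact: leq_trans ji hf.
exact: leq_trans ji hg.
Qed.

Lemma nek_hE (C : numClosedFieldType) n (B : 'M[C]_n) (i : 'I_n) :
  nek_h B i = \sum_(j < n | (j < i)%N) `|B i j| * nek_h B j / `|B j j|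
              + \sum_(j < n | (i < j)%N) `|B i j|.
Proof.
rewrite /nek_h /=; congr (_ + _); apply: eq_bigr => j ji.
by rewrite (@hfuel_stable _ _ B i j.+1).
Qed.

Lemma nek_h_ge0 (C : numClosedFieldType) n (B : 'M[C]_n) (i : 'I_n) : 0 <= nek_h B i.
Proof.
rewrite /nek_h; move: (i.+1) => f; elim: f i => [|f IH] i /=; first by [].
apply: addr_ge0; apply: sumr_ge0 => j _ //.
by apply: divr_ge0; [apply: mulr_ge0|].
Qed.

Theorem corollary4p2 (C : numClosedFieldType) (n : nat) (A : 'M[C]_n.+1)
  (kbar : 'I_n.+1) (eps : 'I_n.+1 -> C) :
  nekrasov A^T ->
  (* kbar is the smallest index k with a_{jk} = 0 for all j > k *)
  (forall j : 'I_n.+1, (kbar < j)%N -> A j kbar = 0) ->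
  (forall k : 'I_n.+1, (k < kbar)%N -> exists2 j : 'I_n.+1, (k < j)%N & A j k != 0) ->
  (forall i : 'I_n.+1, (i < kbar)%N -> eps i = 0) ->
  (forall i : 'I_n.+1, (kbar <= i)%N ->
     [/\ eps i \is Num.real, 0 < eps i, eps i < `|A i i| - nek_h A^T i
       & \sum_(j < n.+1 | (kbar <= j < i)%N) `|A j i| * eps j / `|A j j| < eps i]) ->
  let w := fun i : 'I_n.+1 =>
    \sum_(j < n.+1 | (j < i)%N) `|A j i| * eps j / `|A j j| in
  let p := fun i : 'I_n.+1 =>
    \sum_(j < n.+1 | (i < j)%N)
       `|A j i| * (`|A j j| - nek_h A^T j - eps j) / `|A j j| in
  let F := fun i : 'I_n.+1 => (nek_h A^T i + eps i) / `|A i i| in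
  let G := fun i : 'I_n.+1 => eps i - w i + p i in
  norm1 (invmx A) <=
    (\big[Num.max/F ord0]_(i < n.+1) F i) / (\big[Num.min/G ord0]_(i < n.+1) G i).
Proof.
move=> nekA kcol kmin eps_lt eps_ge.
pose w := fun i : 'I_n.+1 =>
    \sum_(j < n.+1 | (j < i)%N) `|A j i| * eps j / `|A j j|.
pose p := fun i : 'I_n.+1 =>
    \sum_(j < n.+1 | (i < j)%N)
       `|A j i| * (`|A j j| - nek_h A^T j - eps j) / `|A j j|.
pose F := fun i : 'I_n.+1 => (nek_h A^T i + eps i) / `|A i i|.
pose G := fun i : 'I_n.+1 => eps i - w i + p i.
change (norm1 (invmx A) <=
    (\big[Num.max/F ord0]_(i < n.+1) F i) / (\big[Num.min/G ord0]_(i < n.+1) G i)).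
set h := nek_h A^T.
have Ann i : A i i != 0 by have [] := nekA i; rewrite mxE.
have hlt i : h i < `|A i i| by have [_] := nekA i; rewrite mxE.
have h0 i : 0 <= h i by exact: nek_h_ge0.
have Apos i : 0 < `|A i i| by rewrite normr_gt0.
have hI i : h i = \sum_(j < n.+1 | (j < i)%N) `|A j i| * h j / `|A j j|
              + \sum_(j < n.+1 | (i < j)%N) `|A j i|.
  rewrite /h nek_hE; congr (_ + _); apply: eq_bigr => j _; by rewrite !mxE.
have eps0 i : 0 <= eps i.
  case: (ltnP i kbar) => ik; first by rewrite eps_lt.
  by have [_ /ltW] := eps_ge i ik.
have slack i : 0 < `|A i i| - h i - eps i.
  case: (ltnP i kbar) => ik.
    by rewrite eps_lt // subr0 subr_gt0.
  by have [_ _ e _] := eps_ge i ik; rewrite subr_gt0.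
have F0 i : 0 <= F i by rewrite /F; apply: divr_ge0; [apply: addr_ge0|].
have pterm0 i j : 0 <= `|A j i| * (`|A j j| - h j - eps j) / `|A j j|.
  by apply: divr_ge0 => //; apply: mulr_ge0 => //; apply: ltW.
have p0 i : 0 <= p i by apply: sumr_ge0 => j _.
have Gpos i : 0 < G i.
  rewrite /G; case: (ltnP i kbar) => ik.
    have -> : w i = 0.
      by rewrite /w big1 // => j ji; rewrite eps_lt ?mulr0 ?mul0r //; exact: ltn_trans ji ik.
    rewrite eps_lt // subr0 add0r.
    have [j ij Aji] := kmin i ik.
    rewrite /p (bigD1 j) //=; apply: ltr_pwDl; last by apply: sumr_ge0 => k _.
    by apply: divr_gt0 => //; apply: mulr_gt0; rewrite ?normr_gt0.
  apply: ltr_pwDl => //; rewrite subr_gt0.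
  have [_ _ _ hs] := eps_ge i ik.
  apply: le_lt_trans hs; rewrite /w [X in X <= _]big_mkcond [X in _ <= X]big_mkcond /=.
  apply: ler_sum => j _; case: (ltnP j kbar) => jk; case: ifP => //= ji.
  by rewrite eps_lt // mulr0 mul0r.
have HG i : G i <= `|A i i| * F i - \sum_(j < n.+1 | j != i) `|A j i| * F j.
  rewrite le_eqVlt; apply/orP; left; apply/eqP.
  have e1 : `|A i i| * F i = h i + eps i.
    by rewrite /F mulrC -mulrA mulVf ?mulr1 // normr_eq0.
  have e2 : \sum_(j < n.+1 | (j < i)%N) `|A j i| * F j =
      \sum_(j < n.+1 | (j < i)%N) `|A j i| * h j / `|A j j| + w i.
    rewrite /w; transitivity (\sum_(j < n.+1 | (j < i)%N)
        (`|A j i| * h j / `|A j j| + `|A j i| * eps j / `|A j j|)).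
      by apply: eq_bigr => j _; rewrite /F mulrA -mulrDl -mulrDr.
    by rewrite big_split.
  have e3 : p i = \sum_(j < n.+1 | (i < j)%N) `|A j i|
                - \sum_(j < n.+1 | (i < j)%N) `|A j i| * F j.
    rewrite /p -sumrB; apply: eq_bigr => j _; rewrite /F.
    have := Ann j; rewrite -normr_eq0 => /negPf nz.
    by field; rewrite nz.
  rewrite sum_neq_split e1 e2 /G e3 [h i]hI; ring.
have Greal i : G i \is Num.real by apply: gtr0_real.
have Freal i : F i \is Num.real by apply: ger0_real.
set mG := \big[Num.min/G ord0]_(i < n.+1) G i.
set mF := \big[Num.max/F ord0]_(i < n.+1) F i.
have mGpos : 0 < mG by have [k e] := bigmin_mem _ _ G; rewrite /mG e; exact: Gpos.
have mGle i : mG <= G i by apply: bigmin_le => //; rewrite mem_index_enum.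
have mFge i : F i <= mF by apply: bigmax_ge => //; rewrite mem_index_enum.
have Aunit : A \in unitmx.
  rewrite unitmxE unitfE -det_tr; apply/negP => /det0P [v vn0 vA].
  have Ay0 i : \sum_(j < n.+1) A i j * v 0 j = 0.
    have := congr1 (fun M : 'rV[C]_n.+1 => M 0 i) vA; rewrite !mxE => e; apply: (etrans _ e).
    by apply: eq_bigr => j _; rewrite mxE mulrC.
  have := @key _ _ A F G (fun i => v 0 i) F0 HG.
  move=> hle'.
  have hle : \sum_(i < n.+1) `|v 0 i| * G i <= 0.
    apply: (le_trans hle'); rewrite big1 // => i _.
    by rewrite Ay0 normr0 mulr0.
  have hz : \sum_(i < n.+1) `|v 0 i| * G i = 0.
    apply/eqP; rewrite eq_le hle /=; apply: sumr_ge0 => i _.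
    by apply: mulr_ge0 => //; apply: ltW.
  move/negP: vn0; apply; apply/eqP/matrixP => a b; rewrite (ord1 a) mxE.
  have := psumr_eq0P (fun i _ => mulr_ge0 (normr_ge0 (v 0 i)) (ltW (Gpos i))) hz (i:=b) isT.
  move/eqP; rewrite mulf_eq0 (gt_eqF (Gpos b)) orbF normr_eq0 => /eqP.
  by [].
have bound0 : 0 <= mF / mG.
  by apply: divr_ge0; [exact: le_trans (F0 ord0) (mFge ord0)|exact: ltW].
have col c : \sum_(i < n.+1) `|invmx A i c| <= mF / mG.
  set Y := invmx A.
  have AY i : \sum_(j < n.+1) A i j * Y j c = (i == c)%:R.
    have := congr1 (fun M : 'M[C]_n.+1 => M i c) (mulmxV Aunit); rewrite !mxE => e.
    exact: e.
  have rhs : \sum_(i < n.+1) F i * `|\sum_(j < n.+1) A i j * Y j c| = F c.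
    rewrite (bigD1 c) // [X in _ + X = _]big1 => [|i ic].
      by rewrite AY eqxx normr1 mulr1 addr0.
    by rewrite AY (negPf ic) normr0 mulr0.
  have := @key _ _ A F G (fun j => Y j c) F0 HG; rewrite rhs => hk.
  rewrite ler_pdivlMr // mulrC; apply: le_trans (mFge c).
  apply: le_trans hk; rewrite mulr_sumr; apply: ler_sum => i _.
  by rewrite mulrC; apply: ler_wpM2l.
rewrite /norm1; apply: (big_ind (fun x => x <= mF / mG)).
- exact: bound0.
- by move=> x y hx hy; rewrite /Num.max /Order.max; case: ifP.
- by move=> j _; exact: col j.
Qed.
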